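(* For each $c>0$ let $\alpha_c,\beta_c,\gamma:\mathbb{R}^n\times\mathbb{S}^m\to\mathbb{R}$ satisfy conditions (a)–(e) below, and let $\mathcal{A}_c(x,\Lambda):=f(x)+\alpha_c(x,\Lambda)\,\varphi(G(x),\beta_c(x,\Lambda)\Lambda)+\gamma(x,\Lambda)$ with $\varphi(Y,Z)=\|P(Z/2-Y)\|_F^2-\|Z\|_F^2/4$. Conditions: (a) $\alpha_c,\beta_c,\gamma$ are continuously differentiable for all $c>0$; (b) $\alpha_c(x,\Lambda)>0$ for all $x$ feasible for (NSDP), all $\Lambda$, all $c>0$; and for every KKT pair $(\bar x,\bar\Lambda)$ of (NSDP): (c) $\alpha_c(\bar x,\bar\Lambda)\beta_c(\bar x,\bar\Lambda)=1$ for all $c>0$; (d) $\gamma(\bar x,\bar\Lambda)=0$, $\nabla_x\gamma(\bar x,\bar\Lambda)=0$, $\nabla_\Lambda\gamma(\bar x,\bar\Lambda)=0$; (e) there exist neighborhoods $V_{\bar x}$, $V_{\bar\Lambda}$ of $\bar x,\bar\Lambda$ and a continuous $\Gamma:V_{\bar x}\to V_{\bar\Lambda}$ with $\Gamma(\bar x)=\bar\Lambda$ and $\gamma(x,\Gamma(x))=0$ for all $x\in V_{\bar x}$. Assume also that $G_{\mathrm{NSDP}}\neq\emptyset$, $G_{\mathrm{NLP}}(c)\neq\emptyset$ for all $c>0$, and for every $x\in G_{\mathrm{NSDP}}$ there is at least one $\Lambda$ such that $(x,\Lambda)$ is a KKT pair of (NSDP). Finally assume there exists $\hat c>0$ such that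 for all $c\ge\hat c$, every stationary point of $\mathcal{A}_c$ (a point where $\nabla_x\mathcal{A}_c=0$ and $\nabla_\Lambda\mathcal{A}_c=0$) is a KKT pair of (NSDP). Then: (a) $G_{\mathrm{NLP}}(c)=\tilde G_{\mathrm{NSDP}}$ for all $c\ge\hat c$; (b) $L_{\mathrm{NLP}}(c)\subseteq\{(x,\Lambda): x\in L_{\mathrm{NSDP}}\text{ and }\Lambda\text{ is a corresponding Lagrange multiplier}\}$ for all $c\ge\hat c$.
   Context: $\mathbb{S}^m$ is the space of real symmetric $m\times m$ matrices with inner product $\langle Y,Z\rangle=\operatorname{tr}(YZ)$ and Frobenius norm; $\mathbb{S}^m_+$ is the PSD cone and $P$ the orthogonal projection onto it. $f:\mathbb{R}^n\to\mathbb{R}$, $G:\mathbb{R}^n\to\mathbb{S}^m$ are twice continuously differentiable; (NSDP) is: minimize $f(x)$ s.t. $G(x)\in\mathbb{S}^m_+$. $\nabla G(x)^*Z=(\langle\partial G(x)/\partial x_i,Z\rangle)_{i=1}^n$. With $Y\circ Z=(YZ+ZY)/2$, $(x,\Lambda)$ is a KKT pair of (NSDP) if $\nabla f(x)-\nabla G(x)^*\Lambda=0$, $\Lambda\circ G(x)=0$, $G(x)\in\mathbb{S}^m_+$, $\Lambda\in\mathbb{S}^m_+$; then $\Lambda$ is a Lagrange multiplier corresponding to $x$. $G_{\mathrm{NSDP}}$ and $L_{\mathrm{NSDP}}$ are the sets of global and local minimizers of (NSDP); $G_{\mathrm{NLP}}(c)$ and $L_{\mathrm{NLP}}(c)$ are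 the sets of global and local minimizers of $\mathcal{A}_c$ over $\mathbb{R}^n\times\mathbb{S}^m$; $\tilde G_{\mathrm{NSDP}}:=\{(x,\Lambda): x\in G_{\mathrm{NSDP}}\text{ and }\Lambda\text{ is a corresponding Lagrange multiplier}\}$. *)

(* Defs.v *)
(* R : realType; R^n = 'rV[R]_n, S^m modelled inside 'M[R]_m. *)
From HB Require Import structures.
From mathcomp Require Import all_boot all_order all_algebra.
From mathcomp Require Import all_classical all_reals all_analysis.
Set Implicit Arguments. Unset Strict Implicit. Unset Printing Implicit Defensive.
Import Order.TTheory GRing.Theory Num.Theory.
Import numFieldNormedType.Exports.
Local Open Scope classical_set_scope.
Local Open Scope ring_scope.

Section Defs.
Variable R : realType.

Definition sym_mat (m : nat) (Y : 'M[R]_m) : Prop := Y^T = Y.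
Definition symmx (m : nat) (M : 'M[R]_m) : 'M[R]_m := 2^-1 *: (M + M^T).
Definition frob_inner (m : nat) (Y Z : 'M[R]_m) : R := \tr (Y *m Z).
Definition frob (m : nat) (Y : 'M[R]_m) : R := Num.sqrt (\tr (Y^T *m Y)).
Definition psd (m : nat) (Y : 'M[R]_m) : Prop :=
  sym_mat Y /\ forall v : 'rV[R]_m, 0 <= (v *m Y *m v^T) 0 0.
Definition projPSD (m : nat) (X : 'M[R]_m) : 'M[R]_m :=
  xget 0 [set Y | psd Y /\ forall W, psd W -> frob (X - Y) <= frob (X - W)].
Definition jordan (m : nat) (Y Z : 'M[R]_m) : 'M[R]_m := 2^-1 *: (Y *m Z + Z *m Y).
Definition phi (m : nat) (Y Z : 'M[R]_m) : R :=
  frob (projPSD (2^-1 *: Z - Y)) ^+ 2 - frob Z ^+ 2 / 4.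

Definition C1 (V W : normedModType R) (h : V -> W) : Prop :=
  (forall x, differentiable h x) /\ (forall v, continuous (fun x => 'd h x v)).
Definition C2 (V W : normedModType R) (h : V -> W) : Prop :=
  C1 h /\ (forall v, C1 (fun x => 'd h x v)).

(* a function on R^n x S^m, given as a function on 'rV_n * 'M_m whose values
   off R^n x S^m are irrelevant; symlift h reads it only on R^n x S^m *)
Definition symlift (n m : nat) (T : Type) (h : 'rV[R]_n * 'M[R]_m -> T) :
  'rV[R]_n * 'M[R]_m -> T := fun p => h (p.1, symmx p.2).

Definition evec (n : nat) (i : 'I_n) : 'rV[R]_n := delta_mx 0 i.

Definition KKT (n m : nat) (f : 'rV[R]_n -> R) (G : 'rV[R]_n -> 'M[R]_m)
  (x : 'rV[R]_n) (L : 'M[R]_m) : Prop :=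
  [/\ forall i : 'I_n, 'd f x (evec i) - frob_inner ('d G x (evec i)) L = 0,
      jordan L (G x) = 0, psd (G x) & psd L].

Definition feasible (n m : nat) (G : 'rV[R]_n -> 'M[R]_m) (x : 'rV[R]_n) : Prop :=
  psd (G x).

Definition G_NSDP (n m : nat) (f : 'rV[R]_n -> R) (G : 'rV[R]_n -> 'M[R]_m) :
  set 'rV[R]_n :=
  [set x | feasible G x /\ forall y, feasible G y -> f x <= f y].
Definition L_NSDP (n m : nat) (f : 'rV[R]_n -> R) (G : 'rV[R]_n -> 'M[R]_m) :
  set 'rV[R]_n :=
  [set x | feasible G x /\ \forall y \near x, feasible G y -> f x <= f y].

Definition tG_NSDP (n m : nat) (f : 'rV[R]_n -> R) (G : 'rV[R]_n -> 'M[R]_m) :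
  set ('rV[R]_n * 'M[R]_m) :=
  [set p | G_NSDP f G p.1 /\ KKT f G p.1 p.2].
Definition tL_NSDP (n m : nat) (f : 'rV[R]_n -> R) (G : 'rV[R]_n -> 'M[R]_m) :
  set ('rV[R]_n * 'M[R]_m) :=
  [set p | L_NSDP f G p.1 /\ KKT f G p.1 p.2].

Definition Aug (n m : nat) (f : 'rV[R]_n -> R) (G : 'rV[R]_n -> 'M[R]_m)
  (alpha beta : 'rV[R]_n * 'M[R]_m -> R) (gamma : 'rV[R]_n * 'M[R]_m -> R)
  (p : 'rV[R]_n * 'M[R]_m) : R :=
  f p.1 + alpha p * phi (G p.1) (beta p *: p.2) + gamma p.

Definition Gmin (n m : nat) (A : 'rV[R]_n * 'M[R]_m -> R) :
  set ('rV[R]_n * 'M[R]_m) :=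
  [set p | sym_mat p.2 /\ forall q, sym_mat q.2 -> A p <= A q].
Definition Lmin (n m : nat) (A : 'rV[R]_n * 'M[R]_m -> R) :
  set ('rV[R]_n * 'M[R]_m) :=
  [set p | sym_mat p.2 /\ \forall q \near p, sym_mat q.2 -> A p <= A q].

(* stationary point over R^n x S^m: grad_x A = 0 and grad_Lambda A = 0
   (the latter in S^m, i.e. all derivatives of A(x, .) along S^m vanish) *)
Definition stationary (n m : nat) (A : 'rV[R]_n * 'M[R]_m -> R)
  (x : 'rV[R]_n) (L : 'M[R]_m) : Prop :=
  [/\ sym_mat L,
      (forall v : 'rV[R]_n, 'd (fun y : 'rV[R]_n => A (y, L)) x v = 0) &
      (forall H : 'M[R]_m, 'd (fun M : 'M[R]_m => symlift A (x, M)) L H = 0)].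

End Defs.

(* Main.v *)
Require Import Defs.
From HB Require Import structures.
From mathcomp Require Import all_boot all_order all_algebra.
From mathcomp Require Import all_classical all_reals all_analysis.
From mathcomp Require Import ring lra.
Import Order.TTheory GRing.Theory Num.Theory.
Import numFieldNormedType.Exports.
Local Open Scope classical_set_scope.
Local Open Scope ring_scope.

Section Mx.
Context {R : realType} {m : nat}.
Implicit Types (A B X Y Z W P : 'M[R]_m) (u v : 'rV[R]_m).

Definition bf B u v : R := (u *m B *m v^T) 0 0.

Lemma bfE B u v : bf B u v = \sum_i \sum_j u 0 i * B i j * v 0 j.
Proof.
rewrite /bf mxE; under eq_bigr => j _ do rewrite !mxE big_distrl /=.
rewrite exchange_big /=; apply: eq_bigr => i _; apply: eq_bigr => j _.
done.
Qed.

Lemma bfDl B u1 u2 v : bf B (u1 + u2) v = bf B u1 v + bf B u2 v.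
Proof. by rewrite /bf !mulmxDl mxE. Qed.
Lemma bfDr B u v1 v2 : bf B u (v1 + v2) = bf B u v1 + bf B u v2.
Proof. by rewrite /bf linearD /= mulmxDr mxE. Qed.
Lemma bfZl B a u v : bf B (a *: u) v = a * bf B u v.
Proof. by rewrite /bf -!scalemxAl mxE. Qed.
Lemma bfZr B a u v : bf B u (a *: v) = a * bf B u v.
Proof. by rewrite /bf linearZ /= -scalemxAr mxE. Qed.
Lemma bfC B u v : sym_mat B -> bf B u v = bf B v u.
Proof.
move=> sB; rewrite !bfE exchange_big /=; apply: eq_bigr => i _; apply: eq_bigr => j _.
by rewrite -{1}sB mxE; ring.
Qed.
Lemma bf_delta B i j : bf B (delta_mx 0 i) (delta_mx 0 j) = B i j.
Proof.
rewrite bfE (bigD1 i) //= [X in _ + X]big1 ?addr0 => [|k ki]; last first.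
  by apply: big1 => l _; rewrite mxE (negbTE ki) andbF mul0r mul0r.
rewrite (bigD1 j) //= [X in _ + X]big1 ?addr0 => [|k kj]; last by rewrite [delta_mx 0 j 0 k]mxE (negbTE kj) andbF mulr0.
by rewrite !mxE !eqxx /= mul1r mulr1.
Qed.

Lemma psd_bf B u : psd B -> 0 <= bf B u u.
Proof. by case=> _ /(_ u). Qed.

Lemma quad B u v t : psd B ->
  0 <= bf B u u + 2 * t * bf B u v + t ^+ 2 * bf B v v.
Proof.
move=> pB; have := @psd_bf B (u + t *: v) pB.
rewrite bfDl !bfDr !bfZl !bfZr (@bfC B v u pB.1).
by move=> h; apply: (le_trans h) => //; rewrite le_eqVlt; apply/orP; left; apply/eqP; ring.
Qed.


Lemma disc0 (b c : R) : 0 <= c -> (forall t, 0 <= 2 * t * b + t ^+ 2 * c) -> b = 0.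
Proof.
move=> c0 H; have c1 : 0 < c + 1 by lra.
set k := (c + 1)^-1.
have hk : (c + 1) * k = 1 by rewrite /k mulfV // gt_eqF.
have k0 : 0 < k by rewrite /k invr_gt0.
have := H (- b * k); move=> h.
have h2 : 0 <= b ^+ 2 * k * (- 2 + k * c).
  by apply: (le_trans h); rewrite le_eqVlt; apply/orP; left; apply/eqP; ring.
have h1 : - 2 + k * c < 0.
  have e : k * c = 1 - k by rewrite -hk; ring.
  by rewrite e; lra.
apply/eqP; rewrite -sqrf_eq0 eq_le sqr_ge0 andbT.
have : 0 <= b ^+ 2 * k by rewrite mulr_ge0 // ?sqr_ge0 // ltW.
move=> h3; rewrite -(pmulr_lle0 _ k0) .
by nra.
Qed.

Lemma schur_ineq (a b c : R) : 0 < c -> (forall t, 0 <= a + 2 * t * b + t ^+ 2 * c) ->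
  0 <= a - c^-1 * b ^+ 2.
Proof.
move=> c0 H; have := H (- b / c).
have hk : c * c^-1 = 1 by rewrite mulfV // gt_eqF.
move=> h; have -> : a - c^-1 * b ^+ 2 = a + 2 * (- b / c) * b + (- b / c) ^+ 2 * c.
  rewrite /= -[_ / c]/(- b * c^-1); rewrite expr2.
  have e : c^-1 * c = 1 by rewrite mulVf // gt_eqF.
  rewrite -!mulrA [c^-1 * (- b * (c^-1 * c))]mulrC e. ring.
exact: h.
Qed.

Lemma psd_diag0 B i j : psd B -> B j j = 0 -> B i j = 0.
Proof.
move=> pB hj.
have hc : 0 <= B i i by rewrite -bf_delta; apply: psd_bf.
have -> : B i j = bf B (delta_mx 0 j) (delta_mx 0 i).
  by rewrite bf_delta; have := pB.1 => /matrixP /(_ j i); rewrite mxE.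
apply: (@disc0 _ (B i i) hc) => t; have := quad B (delta_mx 0 j : 'rV[R]_m) (delta_mx 0 i) t pB.
by rewrite !bf_delta hj add0r.
Qed.


Lemma bfB B1 B2 u v : bf (B1 - B2) u v = bf B1 u v - bf B2 u v.
Proof. by rewrite /bf mulmxBr mulmxBl !mxE. Qed.
Lemma bfZ a B u v : bf (a *: B) u v = a * bf B u v.
Proof. by rewrite /bf -scalemxAr -scalemxAl !mxE. Qed.

Lemma mx11E (a b : 'M[R]_1) : (a *m b) 0 0 = a 0 0 * b 0 0.
Proof. by rewrite mxE big_ord1. Qed.

Lemma bf_rank1 (r : 'rV[R]_m) u v :
  bf (r^T *m r) u v = (u *m r^T) 0 0 * (v *m r^T) 0 0.
Proof.
rewrite /bf mulmxA -[u *m r^T *m r *m v^T]mulmxA mx11E.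
by congr (_ * _); rewrite -[r *m v^T]trmxK trmx_mul trmxK mxE.
Qed.

Lemma tr11 (a : 'M[R]_1) : \tr a = a 0 0.
Proof. by rewrite /mxtrace big_ord1. Qed.

Lemma tr_rank1 A (r : 'rV[R]_m) : \tr (A *m (r^T *m r)) = bf A r r.
Proof. by rewrite mulmxA mxtrace_mulC tr11 /bf mulmxA. Qed.

Lemma row_bf B (v : 'rV[R]_m) i : sym_mat B -> (v *m (row i B)^T) 0 0 = bf B v (delta_mx 0 i).
Proof. by move=> sB; rewrite rowE trmx_mul sB /bf mulmxA. Qed.

Definition schur B i := B - (B i i)^-1 *: ((row i B)^T *m row i B).

Lemma schur_psd B i : psd B -> 0 < B i i -> psd (schur B i).
Proof.
move=> pB c0; split.
  rewrite /sym_mat /schur linearB /= linearZ /= trmx_mul trmxK.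
  by rewrite [B^T]pB.1.
move=> v; have := bfB. rewrite /bf. move=> _.
rewrite -/(bf _ v v) /schur bfB bfZ bf_rank1 (@row_bf B v i pB.1).
rewrite -expr2 -(bf_delta B i i).
apply: schur_ineq; first by rewrite bf_delta.
move=> t; exact: (quad B v (delta_mx 0 i) t pB).
Qed.

Lemma schur_diag B i j : (schur B i) j j = B j j - (B i i)^-1 * (B i j) ^+ 2.
Proof. by rewrite /schur !mxE big_ord1 !mxE expr2. Qed.

Lemma selfdual_aux A (pA : psd A) k : forall B, psd B ->
  (#|[pred j | B j j != 0%R]| <= k)%N -> 0 <= \tr (A *m B).
Proof.
elim: k => [|k IH] B pB.
  rewrite leqn0 => /eqP /card0_eq h.
  have -> : B = 0.
    apply/matrixP => i j; rewrite mxE; apply: psd_diag0 => //.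
    by have := h j; rewrite !inE => /negbFE /eqP.
  by rewrite mulmx0 mxtrace0.
case: (pickP [pred j | B j j != 0]) => [i /= hi | h0] hk; last first.
  apply: IH => //; rewrite (@eq_card _ _ pred0) ?card0 // => j.
have c0 : 0 < B i i.
  by rewrite lt_def hi -(bf_delta B i i) psd_bf.
have -> : B = schur B i + (B i i)^-1 *: ((row i B)^T *m row i B).
  by rewrite /schur subrK.
rewrite mulmxDr mxtraceD; apply: addr_ge0.
  apply: IH; first exact: schur_psd.
  rewrite (cardD1 i) !inE hi /= add1n ltnS in hk.
  apply: leq_trans hk; apply: subset_leq_card; apply/fintype.subsetP => j.
  rewrite !inE schur_diag.
  case: (eqVneq j i) => [->|ji] /=.
    by rewrite expr2 mulrA (mulVf hi) mul1r subrr eqxx.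
  apply: contraNN => /eqP hj.
  by rewrite hj (@psd_diag0 B i j pB hj) expr2 mulr0 mulr0 subrr.
rewrite -scalemxAr mxtraceZ tr_rank1 mulr_ge0 ?psd_bf //.
by rewrite invr_ge0 ltW.
Qed.

Lemma selfdual A B : psd A -> psd B -> 0 <= \tr (A *m B).
Proof. by move=> pA pB; apply: (@selfdual_aux A pA _ B pB (leqnn _)). Qed.


Definition ip X Y : R := \tr (X^T *m Y).

Lemma ipE X Y : ip X Y = \sum_i \sum_j X j i * Y j i.
Proof. by rewrite /ip /mxtrace; apply: eq_bigr => i _; rewrite mxE; apply: eq_bigr => j _; rewrite mxE. Qed.

Lemma ipC X Y : ip X Y = ip Y X.
Proof. by rewrite !ipE; apply: eq_bigr => i _; apply: eq_bigr => j _; rewrite mulrC. Qed.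
Lemma ipDl X Y Z : ip (X + Y) Z = ip X Z + ip Y Z.
Proof. by rewrite /ip linearD /= mulmxDl mxtraceD. Qed.
Lemma ipDr X Y Z : ip Z (X + Y) = ip Z X + ip Z Y.
Proof. by rewrite /ip mulmxDr mxtraceD. Qed.
Lemma ipZl a X Y : ip (a *: X) Y = a * ip X Y.
Proof. by rewrite /ip linearZ /= -scalemxAl mxtraceZ. Qed.
Lemma ipZr a X Y : ip X (a *: Y) = a * ip X Y.
Proof. by rewrite /ip -scalemxAr mxtraceZ. Qed.
Lemma ipNl X Y : ip (- X) Y = - ip X Y.
Proof. by rewrite -scaleN1r ipZl mulN1r. Qed.
Lemma ipNr X Y : ip X (- Y) = - ip X Y.
Proof. by rewrite -scaleN1r ipZr mulN1r. Qed.
Lemma ipBl X Y Z : ip (X - Y) Z = ip X Z - ip Y Z.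
Proof. by rewrite ipDl ipNl. Qed.
Lemma ipBr X Y Z : ip Z (X - Y) = ip Z X - ip Z Y.
Proof. by rewrite ipDr ipNr. Qed.

Lemma ip_ge0 X : 0 <= ip X X.
Proof. by rewrite ipE; apply: sumr_ge0 => i _; apply: sumr_ge0 => j _; rewrite -expr2 sqr_ge0. Qed.

Lemma ip_eq0 X : ip X X = 0 -> X = 0.
Proof.
rewrite ipE => /eqP; rewrite psumr_eq0 => [/allP h|i _]; last first.
  by apply: sumr_ge0 => j _; rewrite -expr2 sqr_ge0.
apply/matrixP => j i; rewrite mxE.
have /h : i \in index_enum 'I_m by rewrite mem_index_enum.
rewrite /= psumr_eq0 => [/allP h2|k _]; last by rewrite -expr2 sqr_ge0.
have /h2 : j \in index_enum 'I_m by rewrite mem_index_enum.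
by rewrite /= -expr2 sqrf_eq0 => /eqP.
Qed.

Lemma frob2 X : frob X ^+ 2 = ip X X.
Proof. by rewrite /frob sqr_sqrtr // ip_ge0. Qed.

Lemma frob_le X Y : frob X <= frob Y -> ip X X <= ip Y Y.
Proof. by rewrite /frob ler_sqrt // ip_ge0. Qed.

Lemma frob_leP X Y : ip X X <= ip Y Y -> frob X <= frob Y.
Proof. by rewrite /frob ler_sqrt // ip_ge0. Qed.

Lemma ip_sym X Y : sym_mat X -> ip X Y = \tr (X *m Y).
Proof. by rewrite /ip => ->. Qed.

Lemma ip_psd X Y : psd X -> psd Y -> 0 <= ip X Y.
Proof. move=> pX pY; rewrite ip_sym; last exact: pX.1. exact: selfdual. Qed.

Lemma psdD A B : psd A -> psd B -> psd (A + B).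
Proof.
move=> pA pB; split; first by rewrite /sym_mat linearD /= pA.1 pB.1.
by move=> v; rewrite mulmxDr mulmxDl mxE addr_ge0 //; [apply: pA.2|apply: pB.2].
Qed.
Lemma psdZ a A : 0 <= a -> psd A -> psd (a *: A).
Proof.
move=> a0 pA; split; first by rewrite /sym_mat linearZ /= pA.1.
by move=> v; rewrite -scalemxAr -scalemxAl mxE mulr_ge0 //; apply: pA.2.
Qed.
Lemma psd0 : psd (0 : 'M[R]_m).
Proof. by split; [rewrite /sym_mat trmx0 | move=> v; rewrite mulmx0 mul0mx mxE]. Qed.


Arguments ip_psd {X Y}.
Arguments psdZ {a A}.
Arguments psdD {A B}.
Arguments frob_le {X Y}.
Arguments frob_leP {X Y}.

Lemma ip_sub2 A B : ip (A - B) (A - B) = ip A A - 2 * ip A B + ip B B.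
Proof. rewrite ipBl !ipBr (ipC B A); ring. Qed.

Lemma projPSD_spec X P : psd P -> (forall W, psd W -> frob (X - P) <= frob (X - W)) ->
  psd (projPSD X) /\ forall W, psd W -> frob (X - projPSD X) <= frob (X - W).
Proof.
move=> pP hP; rewrite /projPSD.
match goal with |- context [xget 0 ?Q] => have := @xgetI _ 0 Q P (conj pP hP) end.
by [].
Qed.

Arguments projPSD_spec {X P}.

Lemma ip_add2 A B e : ip (A + e *: B) (A + e *: B) = ip A A + 2 * e * ip A B + e ^+ 2 * ip B B.
Proof. rewrite ipDl !ipDr !ipZl !ipZr (ipC B A); ring. Qed.

Lemma phi_kkt Y L b : psd Y -> psd L -> \tr (L *m Y) = 0 -> 0 < b -> phi Y (b *: L) = 0.
Proof.
move=> pY pL tLY b0.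
set Z := b *: L; set H := 2^-1 *: Z; set X := H - Y.
have pH : psd H by rewrite /H /Z scalerA; apply: psdZ => //; apply: mulr_ge0 => //; lra.
have HY : ip H Y = 0 by rewrite /H /Z !ipZl ip_sym ?tLY ?mulr0 //; exact: pL.1.
have eXH : X - H = - Y by rewrite /X addrAC subrr add0r.
have hH : forall W, psd W -> frob (X - H) <= frob (X - W).
  move=> W pW; apply: frob_leP.
  have -> : X - W = (H - W) - Y by rewrite /X addrAC.
  rewrite eXH ipNl ipNr opprK (ip_sub2 (H - W) Y) (ipBl H W Y) HY.
  have := ip_psd pW pY; have := ip_ge0 (H - W); lra.
have [pP hP] := projPSD_spec pH hH.
set P := projPSD X in pP hP.
have := frob_le (hP H pH).
have -> : X - P = (H - P) - Y by rewrite /X addrAC.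
rewrite eXH ipNl ipNr opprK (ip_sub2 (H - P) Y) (ipBl H P Y) HY.
have := ip_psd pP pY; have := ip_ge0 (H - P) => h1 h2 h3.
have e : ip (H - P) (H - P) = 0 by lra.
have /eqP := ip_eq0 (H - P) e; rewrite subr_eq0 => /eqP eHP.
rewrite /phi -/X -/P -eHP !frob2 /H ipZl ipZr; by field.
Qed.

Lemma phi_le0 Y Z : psd Y -> phi Y Z <= 0.
Proof.
move=> pY; rewrite /phi.
set H := 2^-1 *: Z; set X := H - Y.
case: (pselect (exists P, psd P /\ forall W, psd W -> frob (X - P) <= frob (X - W))) =>
  [[P0 [pP0 hP0]] | hn]; last first.
  rewrite /projPSD xgetPN; last by move=> P hP; apply: hn; exists P.
  rewrite /frob /ip trmx0 mul0mx mxtrace0 sqrtr0 expr0n /= sub0r oppr_le0.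
  by apply: mulr_ge0; [apply: sqr_ge0 | lra].
have [pP hP] := projPSD_spec pP0 hP0.
set P := projPSD X in pP hP *.
have s1 : ip P P <= ip X P.
  rewrite leNgt; apply/negP => hlt.
  set d := ip P P - ip X P; set p := ip P P.
  have d0 : 0 < d by rewrite /d subr_gt0.
  have p0 : 0 <= p := ip_ge0 P.
  have pd : 0 < p + d by lra.
  set e := d / (p + d).
  have e0 : 0 <= e by rewrite /e divr_ge0 // ltW.
  have e1 : e <= 1 by rewrite /e ler_pdivrMr // mul1r; lra.
  have e1' : 0 <= 1 - e by lra.
  have := frob_le (hP ((1 - e) *: P) (psdZ e1' pP)).
  have -> : X - (1 - e) *: P = (X - P) + e *: P.
    by rewrite scalerBl scale1r opprB addrA addrAC.
  rewrite ip_add2 (ipBl X P P).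
  have ep : e * p <= d.
    rewrite /e mulrAC ler_pdivrMr // ; nra.
  have epos : 0 < e by rewrite /e divr_gt0.
  rewrite -/p /d -/p in d0 ep *; move=> h.
  have : 0 <= e * (2 * (ip X P - p) + e * p).
    by move: h; rewrite -subr_ge0 => h; apply: (le_trans h); rewrite le_eqVlt; apply/orP; left; apply/eqP; ring.
  rewrite pmulr_rge0 //; lra.
have s2 : 0 <= ip Y P by apply: ip_psd.
have s3 := ip_ge0 (H - P).
rewrite ip_sub2 in s3.
rewrite /X ipBl in s1.
rewrite !frob2.
have -> : ip Z Z / 4 = ip H H by rewrite /H ipZl ipZr; field.
lra.
Qed.

End Mx.

Section Ana.
Context {R : realType}.
Lemma fermat_dir (V : normedModType R) (f : V -> R) x v :
  differentiable f x -> (\forall y \near x, f x <= f y) -> 'd f x v = 0.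
Proof.
move=> df hmin; rewrite -deriveE //.
have dv : derivable f x v := diff_derivable (v:=v) df.
have hn : \forall h \near (0:R), f x <= f (h *: v + x).
  have cg : (fun h : R => h *: v + x) @ (0:R) --> x.
    rewrite -[X in _ --> X]add0r -[X in X + x](scale0r v).
    apply: cvgD; last exact: cvg_cst.
    apply: cvgZl. exact: cvg_id.
  exact: cg hmin.
rewrite /derive.
apply/eqP; rewrite eq_le; apply/andP; split.
  rewrite cvg_at_leftE //; apply: limr_le.
    rewrite -(cvg_at_leftE (fun h => h^-1 *: ((f \o shift x) _ - f x))) //.
    apply: cvg_trans dv; apply: cvg_app.
    move=> A [e egt0 Ae]; exists e => // y ye ylt0; apply: Ae => //.
    exact/ltr0_neq0.
  near=> h; apply: mulr_le0_ge0.
    by rewrite invr_le0; apply: ltW; near: h; exists 1 => /=.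
  rewrite subr_ge0; near: h. by move: hn => /nbhs_ballP [e e0 he]; exists e => // y ye _; apply: he.

rewrite cvg_at_rightE //; apply: limr_ge.
  rewrite -(cvg_at_rightE (fun h => h^-1 *: ((f \o shift x) _ - f x))) //.
  apply: cvg_trans dv; apply: cvg_app.
  move=> A [e egt0 Ae]; exists e => // y ye ylt0; apply: Ae => //.
  exact/lt0r_neq0.
near=> h; apply: mulr_ge0.
  by rewrite invr_ge0; apply: ltW; near: h; exists 1 => /=.
rewrite subr_ge0; near: h. by move: hn => /nbhs_ballP [e e0 he]; exists e => // y ye _; apply: he.

Unshelve. all: by end_near.
Qed.

Lemma dmin0 (V : normedModType R) (f : V -> R) x :
  (\forall y \near x, f x <= f y) -> forall v, 'd f x v = 0.
Proof.
move=> hmin v.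
case: (pselect (differentiable f x)) => [df|ndf]; first exact: fermat_dir.
rewrite /diff xgetPN //= => df hdf; apply: ndf.
apply/diffP; rewrite /diff.
match goal with |- context [xget point ?P] => have := @xgetI _ point P df hdf end.
exact.
Qed.

Context {m : nat}.
Lemma trmx_cont : continuous (fun M : 'M[R]_m => M^T).
Proof.
move=> L A [P hP sub]; exists (fun i j => P j i).
  by move=> i j; have := hP j i; rewrite mxE.
by move=> My hMy; apply: sub => i j /=; rewrite mxE; exact: hMy.
Qed.
Lemma symmx_cont : continuous (@symmx R m).
Proof.
move=> L; rewrite /symmx.
have h1 : (fun M : 'M[R]_m => M + M^T) @ L --> L + L^T.
  exact: (cvgD cvg_id (trmx_cont L)).
have := cvgZr (k := 2^-1) h1. exact.
Qed.

Lemma symmx_id (L : 'M[R]_m) : sym_mat L -> symmx L = L.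
Proof. rewrite /symmx => ->; apply/matrixP => i j; rewrite !mxE; by field. Qed.

Lemma symmx_sym (M : 'M[R]_m) : sym_mat (symmx M).
Proof. by rewrite /sym_mat /symmx linearZ /= linearD /= trmxK addrC. Qed.

Lemma jordan_tr (L Y : 'M[R]_m) : jordan L Y = 0 -> \tr (L *m Y) = 0.
Proof.
move=> h; have := congr1 mxtrace h; rewrite /jordan mxtraceZ mxtraceD mxtrace0 mxtrace_mulC.
move=> e; have : 2^-1 * (2 * \tr (L *m Y)) = 0 by rewrite -e mxtrace_mulC; congr (_ * _); ring.
have h2 : (2:R) != 0 by rewrite pnatr_eq0.
by rewrite mulrA (mulVf h2) mul1r mxtrace_mulC.
Qed.

Lemma stat_of_min {n : nat} (A : 'rV[R]_n * 'M[R]_m -> R) x L : sym_mat L ->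
  (\forall q \near (x, L), sym_mat q.2 -> A (x, L) <= A q) -> stationary A x L.
Proof.
move=> sL hmin; split => //.
  move=> v; apply: dmin0.
  have cg : (fun y => (y, L)) @ x --> (x, L).
    by apply: (@cvg_pair _ _ _ (nbhs x) (nbhs x) (nbhs L)); [exact: cvg_id | exact: cvg_cst].
  have h' : \forall y \near x, sym_mat L -> A (x, L) <= A (y, L) := cg _ hmin.
  by move: h'; apply: filterS => y /= h; apply: h.
move=> H; apply: dmin0.
have cg : (fun M => (x, symmx M)) @ L --> (x, L).
  have h : (@symmx R m) @ L --> symmx L := symmx_cont L.
  rewrite (symmx_id _ sL) in h.
  by apply: (@cvg_pair _ _ _ (nbhs L) (nbhs x) (nbhs L)); [exact: cvg_cst | exact: h].
rewrite /symlift /= (symmx_id _ sL).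
have h' : \forall M \near L, sym_mat (symmx M) -> A (x, L) <= A (x, symmx M) := cg _ hmin.
by move: h'; apply: filterS => y /= h; apply: h; apply: symmx_sym.
Qed.

End Ana.

Theorem theorem3p8 (R : realType) (n m : nat)
  (f : 'rV[R]_n -> R) (G : 'rV[R]_n -> 'M[R]_m)
  (alpha beta : R -> 'rV[R]_n * 'M[R]_m -> R)
  (gamma : 'rV[R]_n * 'M[R]_m -> R) (chat : R) :
  (* standing assumptions *)
  C2 f -> C2 G -> (forall x, sym_mat (G x)) ->
  (* (a) *)
  (forall c, 0 < c -> C1 (symlift (alpha c)) /\ C1 (symlift (beta c))) ->
  C1 (symlift gamma) ->
  (* (b) *)
  (forall c x L, 0 < c -> feasible G x -> sym_mat L -> 0 < alpha c (x, L)) ->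
  (* (c), (d), (e) at every KKT pair *)
  (forall xb Lb, KKT f G xb Lb ->
     [/\ (forall c, 0 < c -> alpha c (xb, Lb) * beta c (xb, Lb) = 1),
         [/\ gamma (xb, Lb) = 0,
             (forall v : 'rV[R]_n, 'd (fun y : 'rV[R]_n => gamma (y, Lb)) xb v = 0) &
             (forall H : 'M[R]_m,
                'd (fun M : 'M[R]_m => symlift gamma (xb, M)) Lb H = 0)] &
         exists (U : set 'rV[R]_n) (W : set 'M[R]_m) (Gam : 'rV[R]_n -> 'M[R]_m),
           [/\ nbhs xb U /\ nbhs Lb W,
               (forall x, U x -> sym_mat (Gam x) /\ W (Gam x)),
               {within U, continuous Gam},
               Gam xb = Lb &
               (forall x, U x -> gamma (x, Gam x) = 0)]]) ->
  G_NSDP f G !=set0 ->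
  (forall c, 0 < c -> Gmin (Aug f G (alpha c) (beta c) gamma) !=set0) ->
  (forall x, G_NSDP f G x -> exists L, KKT f G x L) ->
  0 < chat ->
  (forall c, chat <= c -> forall x L,
     stationary (Aug f G (alpha c) (beta c) gamma) x L -> KKT f G x L) ->
  (forall c, chat <= c -> Gmin (Aug f G (alpha c) (beta c) gamma) = tG_NSDP f G) /\
  (forall c, chat <= c -> Lmin (Aug f G (alpha c) (beta c) gamma) `<=` tL_NSDP f G).
Proof.
move=> C2f C2G symG hab hg halpha hkkt [x0 hx0] hGmin hmult chat0 hstat.
have Akkt : forall c x L, 0 < c -> KKT f G x L ->
    Aug f G (alpha c) (beta c) gamma (x, L) = f x.
  move=> c x L c0 K; have [hab1 [g0 _ _] _] := hkkt x L K.
  case: K => _ hj pGx pL.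
  have a0 := halpha c x L c0 pGx pL.1.
  have b0 : 0 < beta c (x, L).
    rewrite ltNge; apply/negP => hb; have := mulr_ge0_le0 (ltW a0) hb.
    rewrite hab1 //; lra.
  by rewrite /Aug /= (phi_kkt _ _ _ pGx pL (jordan_tr _ _ hj) b0) g0 mulr0 !addr0.
have statG : forall c, chat <= c -> forall x L,
    Gmin (Aug f G (alpha c) (beta c) gamma) (x, L) -> KKT f G x L.
  move=> c hc x L [sL hmin]; apply: hstat hc _ _ _; apply: stat_of_min => //.
  apply: (@filterE _ _ _) => q sq; exact: hmin.
have [Ls KLs] := hmult x0 hx0.
split.
  move=> c hc; have c0 : 0 < c := lt_le_trans chat0 hc.
  apply/seteqP; split => [[x L] /= hG | [x L] /= [[fx hxmin] K]].
    have K := statG c hc x L hG.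
    split => //=; split; first by case: K.
    move=> y fy.
    rewrite -(Akkt c x L c0 K).
    apply: (le_trans (hG.2 (x0, Ls) _)); first by case: KLs => _ _ _ [].
    by rewrite (Akkt c x0 Ls c0 KLs); apply: hx0.2.
  split; first by case: K => _ _ _ [].
  move=> [x1 L1] s1; rewrite (Akkt c x L c0 K).
  have [[x2 L2] hp0] := hGmin c c0.
  have K2 := statG c hc x2 L2 hp0.
  apply: (le_trans (hxmin x2 _)); first by case: K2.
  by rewrite -(Akkt c x2 L2 c0 K2); apply: hp0.2.
move=> c hc [x L] /= [sL hloc]; have c0 : 0 < c := lt_le_trans chat0 hc.
have K : KKT f G x L by apply: hstat hc _ _ _; exact: stat_of_min.
split => //=; split; first by case: K.
have [_ _ [U [W [Gam [[hU hW] hUW cont GamL hgam]]]]] := hkkt x L K.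
have cGam : Gam @ x --> L.
  have := cont x; rewrite /continuous_at -(nbhs_subspace_interior hU) /from_subspace /= GamL.
  exact.
have cg : (fun y => (y, Gam y)) @ x --> (x, L).
  by apply: (@cvg_pair _ _ _ (nbhs x) (nbhs x) (nbhs L)); [exact: cvg_id | exact: cGam].
have hn := cg _ hloc.
apply: filterS2 hU hn => y Uy hy fy /=.
have [sG _] := hUW y Uy.
have := hy sG; rewrite (Akkt c x L c0 K) /Aug /= hgam // addr0.
have a0 := halpha c y (Gam y) c0 fy sG.
have p0 := phi_le0 (G y) (beta c (y, Gam y) *: Gam y) fy.
have : alpha c (y, Gam y) * phi (G y) (beta c (y, Gam y) *: Gam y) <= 0.
  by rewrite mulr_ge0_le0 // ltW.
lra.
Qed.
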